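(* Let $m,k\in\mathbb{N}$ and let $\alpha\in\mathbb{C}$ with $\alpha,\ 2+\alpha+2m+k,\ 2+\alpha+2m\notin\mathbb{Z}_0^-$. Then \[ {}_3F_2\left[\begin{array}{r} -2m-1,\ \alpha,\ 2+\alpha+2m+k;\\ -2m-k-1,\ 2+\alpha+2m;\end{array}1\right]_{2m+1}=\frac{(1+\alpha)(2+2k+\alpha+4m)(2+\alpha)_{2m}\left(1+\frac{\alpha}{2}+k\right)_{2m}}{(2+\alpha)(1+2m+k)\left(2+\frac{\alpha}{2}\right)_{2m}(1+k)_{2m}}. \]
   Context: $\mathbb{N}=\{1,2,3,\dots\}$, $\mathbb{Z}_0^-=\{0,-1,-2,\dots\}$. For $a\in\mathbb{C}$ and $n\in\mathbb{N}_0$, $(a)_0=1$ and $(a)_n=a(a+1)\cdots(a+n-1)$. For $N\in\mathbb{N}_0$, ${}_3F_2\left[\begin{array}{r} a_1,a_2,a_3;\\ b_1,b_2;\end{array}z\right]_N=\sum_{n=0}^{N}\frac{(a_1)_n(a_2)_n(a_3)_n}{(b_1)_n(b_2)_n}\frac{z^n}{n!}$ (the sum of the first $N+1$ terms), defined whenever $(b_1)_n(b_2)_n\neq0$ for $0\le n\le N$. *)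

(* Defs.v *)
From HB Require Import structures.
From mathcomp Require Import all_boot all_order all_algebra.
From mathcomp Require Import complex.
From mathcomp Require Import reals.
Set Implicit Arguments. Unset Strict Implicit. Unset Printing Implicit Defensive.
Import Order.TTheory GRing.Theory Num.Theory.
Local Open Scope ring_scope.

Definition poch (F : pzRingType) (a : F) (n : nat) : F :=
  \prod_(i < n) (a + i%:R).

Definition notNonPosInt (F : pzRingType) (a : F) : Prop :=
  forall n : nat, a <> - (n%:R).

Definition F32_trunc (F : fieldType) (a1 a2 a3 b1 b2 z : F) (N : nat) : F :=
  \sum_(n < N.+1)
    (poch a1 n * poch a2 n * poch a3 n) / (poch b1 n * poch b2 n)
      * z ^+ n / (n`!)%:R.

(* Main.v *)
Require Import Defs.
From HB Require Import structures.
From mathcomp Require Import all_boot all_order all_algebra.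
From mathcomp Require Import complex.
From mathcomp Require Import reals.
From mathcomp Require Import ring lra zify.
Import Order.TTheory GRing.Theory Num.Theory.
Set Implicit Arguments. Unset Strict Implicit.
Local Open Scope ring_scope.

Lemma pochS (F : pzRingType) (x : F) n : poch x n.+1 = poch x n * (x + n%:R).
Proof. by rewrite /poch big_ord_recr. Qed.

Lemma pochSl (F : comPzRingType) (x : F) n : poch x n.+1 = x * poch (x + 1) n.
Proof.
rewrite /poch big_ord_recl /= addr0; congr (_ * _).
by apply: eq_bigr => i _; rewrite /bump /= natrD addrA.
Qed.

Lemma poch_neq0 (F : idomainType) (x : F) n :
  (forall i, (i < n)%N -> x + i%:R != 0) -> poch x n != 0.
Proof. by move=> H; apply/prodf_neq0 => i _; apply: H. Qed.

Lemma poch1 (F : pzRingType) n : poch (1 : F) n = n`!%:R.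
Proof.
elim: n => [|n IH]; first by rewrite /poch big_ord0.
by rewrite pochS IH factS mulnC natrM addrC natr1.
Qed.

Definition tm (F : fieldType) (a1 a2 a3 b1 b2 z : F) (n : nat) : F :=
  poch a1 n * poch a2 n * poch a3 n / (poch b1 n * poch b2 n) * z ^+ n / (n`!)%:R.

Lemma negnat_neq0 (F : fieldType) (hN : forall j : nat, (j.+1)%:R != 0 :> F) (p q : nat) :
  (p < q)%N -> (- q%:R + p%:R : F) != 0.
Proof.
move=> H; have -> : q = (p + (q - p).-1.+1)%N by lia.
by rewrite natrD opprD addrC addNKr oppr_eq0; exact: hN.
Qed.

Definition tt (F : fieldType) (N : nat) (a c : F) (k n : nat) : F :=
  tm (-(N%:R)) a (c + k%:R) (-((N+k)%:R)) c 1 n.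
Definition GG (F : fieldType) (N : nat) (a c : F) (k n : nat) : F :=
  ((c + k%:R) * (-((N+k).+1)%:R) * (a + 2 * k%:R + 2))^-1 * n%:R
   * (-((N+k).+1)%:R + n%:R) * (c + n%:R - 1) * tt N a c k n.
Definition rho (F : fieldType) (N : nat) (a : F) (k : nat) : F :=
  (a + 2 * k%:R + 2 * N%:R + 2) * (k%:R + 1) / ((N%:R + k%:R + 1) * (a + 2 * k%:R + 2)).

Lemma step_id (F : fieldType) (hN : forall j : nat, (j.+1)%:R != 0 :> F) (N k n : nat) (a c : F)
  (ha : forall j : nat, a + j%:R != 0) (hc : c = a + N%:R + 1) (hn : (n < N)%N) :
  tt N a c k.+1 n - rho N a k * tt N a c k n = GG N a c k n.+1 - GG N a c k n.
Proof.
have hcn : forall j : nat, c + j%:R != 0.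
  move=> j; rewrite hc; have -> : a + N%:R + 1 + j%:R = a + (N.+1 + j)%:R by rewrite natrD -natr1 !addrA.
  exact: ha.
have eU : poch (c + k.+1%:R) n = poch (c + k%:R) n * (c + k%:R + n%:R) / (c + k%:R).
  rewrite -natr1 addrA -pochS pochSl mulrC mulKf //.
have eV : poch (-((N + k.+1)%:R)) n = -((N+k).+1)%:R * poch (-((N+k)%:R)) n / (-((N+k).+1)%:R + n%:R) :> F.
  have E : -((N+k).+1)%:R + 1 = -((N+k)%:R) :> F by rewrite -natr1 opprD addrNK.
  have h := pochS (-((N+k).+1)%:R : F) n; rewrite pochSl E in h.
  rewrite addnS h mulfK //.
  by rewrite negnat_neq0 //; lia.
rewrite /GG /tt /tm eU eV !expr1n !mulr1 !pochS factS.
have h1 : poch (-((N+k)%:R)) n != 0 :> F.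
  apply: poch_neq0 => i hi; rewrite negnat_neq0 //; lia.
have h2 : poch c n != 0.
  by apply: poch_neq0 => i hi; apply: hcn.
have h3 : n`!%:R != 0 :> F.
  by have := hN (n`!).-1; rewrite prednK // fact_gt0.
have h4 : (-((N+k).+1)%:R + n%:R) != 0 :> F by rewrite negnat_neq0 //; lia.
have h5 : (-((N+k)%:R) + n%:R) != 0 :> F by rewrite negnat_neq0 //; lia.
have h6 : c + k%:R != 0 by apply: hcn.
have h7 : c + n%:R != 0 by apply: hcn.
have h8 : a + 2 * k%:R + 2 != 0.
  have -> : a + 2 * k%:R + 2 = a + (k.*2.+2)%:R by rewrite -!natr1 -addnn natrD; ring.
  exact: ha.
have h9 : -((N+k).+1)%:R != 0 :> F by rewrite oppr_eq0 hN.
have h10 : (N%:R + k%:R + 1) != 0 :> F by rewrite -natrD natr1 hN.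
have h11 : (n.+1)%:R != 0 :> F by rewrite hN.
move: h1 h2 h3 h4 h5 h6 h7 h8 h9 h10 h11.
set X := poch (- N%:R) n; set A := poch a n; set U := poch (c + k%:R) n.
set V := poch (-((N+k)%:R)) n; set C := poch c n.
rewrite hc.
rewrite natrM -(natr1 n) -(natr1 (N+k)) !natrD.
move=> h1 h2 h3 h4 h5 h6 h7 h8 h9 h10 h11.
rewrite /rho.
by field; rewrite ?h1 ?h2 ?h3 ?h4 ?h5 ?h6 ?h7 ?h8 ?h9 ?h10 ?h11.
Qed.

Lemma tt_last (F : fieldType) (N : nat) (a c : F) k : tt N a c k N.+1 = 0.
Proof. by rewrite /tt /tm pochS addNr !(mulr0, mul0r). Qed.

Lemma GG0 (F : fieldType) (N : nat) (a c : F) k : GG N a c k 0 = 0.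
Proof. by rewrite /GG !(mulr0, mul0r). Qed.

Lemma GG_last (F : fieldType) (N : nat) (a c : F) k : GG N a c k N.+1 = 0.
Proof. by rewrite /GG tt_last !(mulr0, mul0r). Qed.

Lemma step_id_last (F : fieldType) (hN : forall j : nat, (j.+1)%:R != 0 :> F) (N k : nat) (a c : F)
  (ha : forall j : nat, a + j%:R != 0) (hc : c = a + N%:R + 1) :
  tt N a c k.+1 N - rho N a k * tt N a c k N = GG N a c k N.+1 - GG N a c k N.
Proof.
rewrite GG_last sub0r.
have hcn : forall j : nat, c + j%:R != 0.
  move=> j; rewrite hc; have -> : a + N%:R + 1 + j%:R = a + (N.+1 + j)%:R by rewrite natrD -natr1 !addrA.
  exact: ha.
have eU : poch (c + k.+1%:R) N = poch (c + k%:R) N * (c + k%:R + N%:R) / (c + k%:R).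
  rewrite -natr1 addrA -pochS pochSl mulrC mulKf //.
have eV : poch (-((N + k.+1)%:R)) N = -((N+k).+1)%:R * poch (-((N+k)%:R)) N / (-((N+k).+1)%:R + N%:R) :> F.
  have E : -((N+k).+1)%:R + 1 = -((N+k)%:R) :> F by rewrite -natr1 opprD addrNK.
  have h := pochS (-((N+k).+1)%:R : F) N; rewrite pochSl E in h.
  rewrite addnS h mulfK //.
  by rewrite negnat_neq0 //; lia.
rewrite /GG /tt /tm eU eV !expr1n !mulr1.
have h1 : poch (-((N+k)%:R)) N != 0 :> F.
  apply: poch_neq0 => i hi; rewrite negnat_neq0 //; lia.
have h2 : poch c N != 0.
  by apply: poch_neq0 => i hi; apply: hcn.
have h3 : N`!%:R != 0 :> F.
  by have := hN (N`!).-1; rewrite prednK // fact_gt0.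
have h4 : (-((N+k).+1)%:R + N%:R) != 0 :> F by rewrite negnat_neq0 //; lia.
have h6 : c + k%:R != 0 by apply: hcn.
have h8 : a + 2 * k%:R + 2 != 0.
  have -> : a + 2 * k%:R + 2 = a + (k.*2.+2)%:R by rewrite -!natr1 -addnn natrD; ring.
  exact: ha.
have h9 : -((N+k).+1)%:R != 0 :> F by rewrite oppr_eq0 hN.
have h10 : (N%:R + k%:R + 1) != 0 :> F by rewrite -natrD natr1 hN.
move: h1 h2 h3 h4 h6 h8 h9 h10.
set X := poch (- N%:R) N; set A := poch a N; set U := poch (c + k%:R) N.
set V := poch (-((N+k)%:R)) N; set C := poch c N.
rewrite hc.
rewrite -(natr1 (N+k)) !natrD.
move=> h1 h2 h3 h4 h6 h8 h9 h10.
rewrite /rho.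
by field; rewrite ?h1 ?h2 ?h3 ?h4 ?h6 ?h8 ?h9 ?h10.
Qed.

Definition SS (F : fieldType) (N : nat) (a c : F) (k : nat) : F :=
  \sum_(n < N.+1) tt N a c k n.

Lemma SS_step (F : fieldType) (hN : forall j : nat, (j.+1)%:R != 0 :> F) (N k : nat) (a c : F)
  (ha : forall j : nat, a + j%:R != 0) (hc : c = a + N%:R + 1) :
  SS N a c k.+1 = rho N a k * SS N a c k.
Proof.
apply/eqP; rewrite -subr_eq0; apply/eqP.
rewrite /SS mulr_sumr -sumrB.
rewrite (eq_bigr (fun i : 'I_N.+1 => GG N a c k i.+1 - GG N a c k i)); last first.
  move=> i _; have := ltn_ord i; rewrite ltnS leq_eqVlt => /orP [/eqP -> | hi].
    exact: step_id_last.
  exact: step_id.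
rewrite -(big_mkord xpredT (fun i => GG N a c k i.+1 - GG N a c k i)).
by rewrite telescope_sumr // GG_last GG0 subr0.
Qed.

Lemma sum_base (F : fieldType) (hN : forall j : nat, (j.+1)%:R != 0 :> F) (a : F) M :
  \sum_(n < M.+1) poch a n / n`!%:R = poch (a + 1) M / M`!%:R.
Proof.
have hf : forall j, j`!%:R != 0 :> F.
  by move=> j; have := hN (j`!).-1; rewrite prednK // fact_gt0.
elim: M => [|M IH].
  by rewrite big_ord1 /poch !big_ord0 fact0 divr1.
rewrite big_ord_recr /= IH pochSl pochS factS natrM.
have := hf M; have := hN M.
move: (poch (a+1) M : F) (M`!%:R : F) => P f h1 h2.
rewrite -natr1 in h1 *.
by field; rewrite h1 h2.
Qed.

Lemma SS0 (F : fieldType) (hN : forall j : nat, (j.+1)%:R != 0 :> F) (N : nat) (a c : F)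
  (ha : forall j : nat, a + j%:R != 0) (hc : c = a + N%:R + 1) :
  SS N a c 0 = poch (a + 1) N / N`!%:R.
Proof.
rewrite -sum_base // /SS; apply: eq_bigr => i _.
have hN0 : forall j, j`!%:R != 0 :> F.
  by move=> j; have := hN (j`!).-1; rewrite prednK // fact_gt0.
have hi := ltn_ord i.
have hcn : forall j : nat, c + j%:R != 0.
  move=> j; rewrite hc; have -> : a + N%:R + 1 + j%:R = a + (N.+1 + j)%:R by rewrite natrD -natr1 !addrA.
  exact: ha.
have h1 : poch (-(N%:R)) i != 0 :> F.
  apply: poch_neq0 => j hj; rewrite negnat_neq0 //; lia.
have h2 : poch c i != 0 by apply: poch_neq0 => j _; apply: hcn.
rewrite /tt /tm addn0 addr0 expr1n mulr1.
move: h1 h2; move: (poch (-(N%:R)) i : F) (poch c i : F) => X C h1 h2.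
field. by rewrite (hN0 i) h1 h2.
Qed.

Lemma poch_up (F : fieldType) (x : F) n : x != 0 -> poch (x+1) n = poch x n * (x + n%:R) / x.
Proof. by move=> h; rewrite -pochS pochSl mulrC mulKf. Qed.

Lemma poch_down (F : fieldType) (x : F) n : x + n%:R != 0 -> poch x n = x * poch (x+1) n / (x + n%:R).
Proof. by move=> h; rewrite -pochSl pochS mulfK. Qed.

Local Open Scope complex_scope.

Theorem mainTheorem15 (R : realType) (m k : nat) (alpha : R[i])
  (hm : (0 < m)%N) (hk : (0 < k)%N)
  (h1 : notNonPosInt alpha)
  (h2 : notNonPosInt (2 + alpha + (2 * m)%:R + k%:R))
  (h3 : notNonPosInt (2 + alpha + (2 * m)%:R)) :
  F32_trunc (- ((2 * m).+1)%:R) alpha (2 + alpha + (2 * m)%:R + k%:R)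
            (- ((2 * m + k).+1)%:R) (2 + alpha + (2 * m)%:R) 1 (2 * m).+1
  = ((1 + alpha) * (2 + (2 * k)%:R + alpha + (4 * m)%:R)
       * poch (2 + alpha) (2 * m) * poch (1 + alpha / 2 + k%:R) (2 * m))
    / ((2 + alpha) * (1 + (2 * m)%:R + k%:R)
       * poch (2 + alpha / 2) (2 * m) * poch (1 + k%:R) (2 * m)).
Proof.
have hN : forall j : nat, (j.+1)%:R != 0 :> R[i] by move=> j; rewrite pnatr_eq0.
have ha : forall j : nat, alpha + j%:R != 0.
  move=> j; apply/eqP => H; apply: (h1 j).
  by rewrite -[alpha](addrK j%:R) H sub0r.
have hc : 2 + alpha + (2 * m)%:R = alpha + ((2 * m).+1)%:R + 1 by rewrite -natr1; ring.
have -> : F32_trunc (- ((2 * m).+1)%:R) alpha (2 + alpha + (2 * m)%:R + k%:R)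
            (- ((2 * m + k).+1)%:R) (2 + alpha + (2 * m)%:R) 1 (2 * m).+1
   = SS (2 * m).+1 alpha (2 + alpha + (2 * m)%:R) k.
  by rewrite /F32_trunc /SS /tt /tm -addSn.
have two : (2 : R[i]) != 0 by have := hN 1.
have hx : forall j : nat, 1 + alpha / 2 + j%:R != 0.
  move=> j; have -> : 1 + alpha / 2 + j%:R = (alpha + (j.*2.+2)%:R) / 2.
    by rewrite -addnn -!natr1 !natrD; field.
  by rewrite mulf_neq0 ?invr_eq0.
have hPb : poch (2 + alpha / 2) (2 * m) != 0.
  apply: poch_neq0 => i _.
  have -> : 2 + alpha / 2 + i%:R = 1 + alpha / 2 + i.+1%:R by rewrite -natr1; ring.
  exact: hx.
have h2a : 2 + alpha != 0 by rewrite addrC; have := ha 2.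
clear hk h2 h3.
elim: k => [|k IH].
  rewrite SS0 // muln0 !addr0 poch1 pochSl.
  have -> : alpha + 1 + 1 = 2 + alpha by ring.
  rewrite (@poch_down _ (1 + alpha / 2)); last first.
    by have := hx (2 * m)%N.
  have -> : 1 + alpha / 2 + 1 = 2 + alpha / 2 by ring.
  have hf : (2 * m)`!%:R != 0 :> R[i] by have := hN ((2 * m)`!).-1; rewrite prednK // fact_gt0.
  have hx2 : 1 + alpha / 2 + (2 * m)%:R != 0 by have := hx (2 * m)%N.
  have hm1 : 1 + (2 * m)%:R != 0 :> R[i] by rewrite addrC natr1.
  rewrite factS natrM.
  move: hf hx2 hm1 hPb; move: (poch (2 + alpha) (2 * m) : R[i]) (poch (2 + alpha / 2) (2 * m) : R[i]) => Pa Pb.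
  rewrite -natr1 natrM.
  move=> hf hx2 hm1 hPb.
  field; rewrite hf hPb hm1 h2a /=.
  suff -> : 2 + alpha + 2 * m%:R * 2 = alpha + ((m * 4).+2)%:R by apply: ha.
  by rewrite -!natr1 natrM; ring.

rewrite SS_step // IH.
have hy : 1 + k%:R != 0 :> R[i] by rewrite addrC natr1.
have -> : 1 + alpha / 2 + k.+1%:R = (1 + alpha / 2 + k%:R) + 1 by rewrite -(natr1 k) addrA.
have -> : 1 + k.+1%:R = (1 + k%:R) + 1 :> R[i] by rewrite -(natr1 k) addrA.
rewrite (@poch_up _ (1 + alpha / 2 + k%:R)) ?hx // (@poch_up _ (1 + k%:R)) //.
have hW : poch (1 + k%:R) (2 * m) != 0 :> R[i].
  by apply: poch_neq0 => i _; rewrite -addrA addrC -natrD natr1.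
have hy2 : 1 + k%:R + (2 * m)%:R != 0 :> R[i] by rewrite -addrA addrC -natrD natr1.
have hz1 : 1 + (2 * m)%:R + k%:R != 0 :> R[i] by rewrite -addrA addrC -natrD natr1.
have hz2 : 1 + (2 * m)%:R + k.+1%:R != 0 :> R[i] by rewrite -addrA addrC -natrD natr1.
have hz3 : (2 * m).+1%:R + k%:R + 1 != 0 :> R[i] by rewrite -natrD natr1.
have hz4 : alpha + 2 * k%:R + 2 != 0.
  suff -> : alpha + 2 * k%:R + 2 = alpha + ((k * 2).+2)%:R by apply: ha.
  by rewrite -!natr1 natrM; ring.
have hxk := hx k.
rewrite /rho.
move: hW hy2 hz1 hz2 hz3 hz4 hxk hy hPb.
move: (poch (2 + alpha) (2 * m) : R[i]) (poch (2 + alpha / 2) (2 * m) : R[i])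
  (poch (1 + alpha / 2 + k%:R) (2 * m) : R[i]) (poch (1 + k%:R) (2 * m) : R[i]) => Pa Pb Q W.
rewrite mulnS !natrD -!natr1 !natrM.
move=> hW hy2 hz1 hz2 hz3 hz4 hxk hy hPb.
field; rewrite ?hW ?hy2 ?hz1 ?hz2 ?hz3 ?hz4 ?hxk ?hy ?hPb ?h2a /=.
apply/and3P; split.
- have -> : 1 + k%:R + (m%:R + m%:R) = (k + m + m).+1%:R :> R[i] by rewrite -natr1 !natrD; ring.
  exact: hN.
- have -> : 1 + (m%:R + m%:R) + (k%:R + 1) = (k + m + m).+2%:R :> R[i] by rewrite -!natr1 !natrD; ring.
  exact: hN.
- suff -> : 2 + alpha + k%:R * 2 = alpha + ((k * 2).+2)%:R by apply: ha.
  by rewrite -!natr1 natrM; ring.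
Qed.
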